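(* Any projective plane curve invariant under $\mathcal{V}$ is defined by a homogeneous polynomial invariant under $\widetilde{\mathcal{V}}$.
   Context: Let $\rho = e^{2\pi i/3}$ and $\tau = (1+\sqrt{5})/2$. Define $Z = \mathrm{diag}(-1,1,-1)$, $T = \begin{pmatrix}0&0&1\\1&0&0\\0&1&0\end{pmatrix}$, $Q = \begin{pmatrix}1&0&0\\0&0&\rho^{2}\\0&-\rho&0\end{pmatrix}$, $P = \frac{1}{2}\begin{pmatrix}1&\tau^{-1}&-\tau\\ \tau^{-1}&\tau&1\\ \tau&-1&\tau^{-1}\end{pmatrix}$, all in $\mathrm{SL}(3,\mathbb{C})$. Let $\widetilde{\mathcal{V}} \subset \mathrm{SL}(3,\mathbb{C})$ be the group generated by $Z,T,Q,P$ and $\mathcal{V}\cong \mathfrak{A}_6$ its image in $\mathrm{PGL}(3,\mathbb{C})$, acting on $\mathbb{P}^2$ via $[A]\cdot(a:b:c)=[A(a,b,c)^t]$. A projective plane curve is a nonzero effective divisor on $\mathbb{P}^2$; it is invariant under $\mathcal{V}$ if $\sigma_*C = C$ for all $\sigma \in \mathcal{V}$. For $A\in \mathrm{GL}(3,\mathbb{C})$ and a homogeneous polynomial $f$, $f^A(\mathbf{x}) = f(A\mathbf{x})$; $f$ is $\widetilde{\mathcal{V}}$-invariant if $f^A = f$ for all $A\in\widetilde{\mathcal{V}}$. *)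

(* Defs.v *)
From HB Require Import structures.
From mathcomp Require Import all_boot all_order all_algebra all_field.
From mathcomp Require Import mpoly.
Set Implicit Arguments. Unset Strict Implicit. Unset Printing Implicit Defensive.
Import Order.TTheory GRing.Theory Num.Theory.
Local Open Scope ring_scope.

(* rho = e^{2 pi i/3} = (-1 + i sqrt 3)/2 ; sqrtC (-3) has positive imaginary part *)
Definition rho : algC := (-1 + sqrtC (-3)) / 2%:R.
Definition tau : algC := (1 + sqrtC 5%:R) / 2%:R.

Definition mx3 (a b c d e f g h i : algC) : 'M[algC]_3 :=
  \matrix_(r < 3, s < 3)
    nth 0 (nth [::] [:: [:: a; b; c]; [:: d; e; f]; [:: g; h; i]] r) s.

Definition Zm : 'M[algC]_3 := mx3 (-1) 0 0  0 1 0  0 0 (-1).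
Definition Tm : 'M[algC]_3 := mx3 0 0 1  1 0 0  0 1 0.
Definition Qm : 'M[algC]_3 := mx3 1 0 0  0 0 (rho ^+ 2)  0 (- rho) 0.
Definition Pm : 'M[algC]_3 :=
  2%:R^-1 *: mx3 1 tau^-1 (- tau)  tau^-1 tau 1  tau (-1) tau^-1.

Inductive inVt : 'M[algC]_3 -> Prop :=
| inVt1 : inVt 1%:M
| inVtZ : inVt Zm
| inVtT : inVt Tm
| inVtQ : inVt Qm
| inVtP : inVt Pm
| inVtM A B : inVt A -> inVt B -> inVt (A *m B)
| inVtV A : inVt A -> inVt (invmx A).

Definition mpoly_act (A : 'M[algC]_3) (f : {mpoly algC[3]}) : {mpoly algC[3]} :=
  f \mPo [tuple \sum_(j < 3) A i j *: 'X_j | i < 3].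

(* A projective plane curve (nonzero effective divisor on P^2) is given by a
   nonzero homogeneous polynomial of positive degree, determined up to a
   nonzero scalar. *)
Definition curve_poly (g : {mpoly algC[3]}) : Prop :=
  g != 0 /\ exists d : nat, (0 < d)%N /\ g \is d.-homog.

Definition same_curve (f g : {mpoly algC[3]}) : Prop :=
  exists2 c : algC, c != 0 & f = c *: g.

(* push-forward of the curve {g = 0} by [A] : it is {g o A^{-1} = 0} *)
Definition push_curve (A : 'M[algC]_3) (g : {mpoly algC[3]}) : {mpoly algC[3]} :=
  mpoly_act (invmx A) g.

(* the curve defined by g is invariant under V = image of Vtilde in PGL(3) *)
Definition V_invariant_curve (g : {mpoly algC[3]}) : Prop :=
  forall A, inVt A -> same_curve (push_curve A g) g.

Definition Vt_invariant_poly (f : {mpoly algC[3]}) : Prop :=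
  forall A, inVt A -> mpoly_act A f = f.

(* Main.v *)
Require Import Defs.
From HB Require Import structures.
From mathcomp Require Import all_boot all_order all_algebra all_field.
From mathcomp Require Import mpoly ring.
Import Order.TTheory GRing.Theory Num.Theory.
Local Open Scope ring_scope.
Lemma rho2 : rho ^+ 2 = - rho - 1.
Proof.
have h : sqrtC (-3) ^+ 2 = -3 :> algC by rewrite sqrtCK.
rewrite /rho. by field: h.
Qed.
Lemma tau2 : tau ^+ 2 = tau + 1.
Proof.
have h : sqrtC 5%:R ^+ 2 = 5%:R :> algC by rewrite sqrtCK.
rewrite /tau. by field: h.
Qed.
Lemma tauV : tau^-1 = tau - 1.
Proof.
have h : tau * (tau - 1) = 1 by ring: tau2.
have tn0 : tau != 0.
  by apply/eqP=> t0; move: h; rewrite t0 mul0r => /eqP; rewrite eq_sym oner_eq0.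
by apply: (mulfI tn0); rewrite mulfV // h.
Qed.

Lemma mx3_mul a b c d e f g h i a' b' c' d' e' f' g' h' i' :
  mx3 a b c d e f g h i *m mx3 a' b' c' d' e' f' g' h' i' =
  mx3 (a*a'+b*d'+c*g') (a*b'+b*e'+c*h') (a*c'+b*f'+c*i')
      (d*a'+e*d'+f*g') (d*b'+e*e'+f*h') (d*c'+e*f'+f*i')
      (g*a'+h*d'+i*g') (g*b'+h*e'+i*h') (g*c'+h*f'+i*i').
Proof.
apply/matrixP => r s; rewrite !mxE !big_ord_recr big_ord0 /= !mxE.
by case: r => [[|[|[|//]]] ?]; case: s => [[|[|[|//]]] ?] /=; rewrite add0r.
Qed.

Lemma mx3_1 : 1%:M = mx3 1 0 0 0 1 0 0 0 1.
Proof.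
by apply/matrixP => r s; rewrite !mxE; case: r => [[|[|[|//]]] ?]; case: s => [[|[|[|//]]] ?].
Qed.

Lemma mx3_eq a b c d e f g h i a' b' c' d' e' f' g' h' i' :
  a = a' -> b = b' -> c = c' -> d = d' -> e = e' -> f = f' -> g = g' -> h = h' -> i = i' ->
  mx3 a b c d e f g h i = mx3 a' b' c' d' e' f' g' h' i'.
Proof. by move=> -> -> -> -> -> -> -> -> ->. Qed.

Lemma Pm_eq : Pm = mx3 (1/2) ((tau-1)/2) (-tau/2) ((tau-1)/2) (tau/2) (1/2) (tau/2) (-1/2) ((tau-1)/2).
Proof.
rewrite /Pm tauV; apply/matrixP => r s; rewrite !mxE.
by case: r => [[|[|[|//]]] ?]; case: s => [[|[|[|//]]] ?] /=; rewrite mulrC.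
Qed.

Ltac mxsolve := rewrite /Zm /Tm /Qm ?Pm_eq ?mx3_1 ?mulmxA !mx3_mul; apply: mx3_eq; by field: rho2 tau2.

Lemma r1 : Zm *m Zm = 1%:M. Proof. mxsolve. Qed.
Lemma r2 : Tm *m Tm *m Tm = 1%:M. Proof. mxsolve. Qed.
Lemma r3 : Zm *m Tm *m Zm *m Tm *m Zm *m Tm = 1%:M. Proof. mxsolve. Qed.
Lemma r4 : Zm *m Pm *m Zm *m Pm *m Zm *m Pm = 1%:M. Proof. mxsolve. Qed.
Lemma r5 : Zm *m Tm *m Pm *m Zm *m Tm *m Pm = 1%:M. Proof. mxsolve. Qed.
Lemma r6 : Tm *m Tm *m Pm *m Tm *m Tm *m Pm = 1%:M. Proof. mxsolve. Qed.
Lemma r7 : Zm *m Qm *m Zm *m Qm = 1%:M. Proof. mxsolve. Qed.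
Lemma QTP_eq : Qm *m Tm *m Pm = mx3 ((tau) / 2%:R) (- (1%:R) / 2%:R) (- (1%:R) / 2%:R + (tau) / 2%:R) ((1%:R) / 2%:R + (rho) / 2%:R - (tau) / 2%:R - (rho * tau) / 2%:R) (- (tau) / 2%:R - (rho * tau) / 2%:R) (- (1%:R) / 2%:R - (rho) / 2%:R) (- (rho) / 2%:R) ((rho) / 2%:R - (rho * tau) / 2%:R) ((rho * tau) / 2%:R).
Proof. mxsolve. Qed.
Lemma r8 : (Qm *m Tm *m Pm) *m (Qm *m Tm *m Pm) *m (Qm *m Tm *m Pm) = 1%:M.
Proof. rewrite QTP_eq. mxsolve. Qed.

Lemma comp_mpolyA3 (p : {mpoly algC[3]}) (lq lr : 3.-tuple {mpoly algC[3]}) :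
  (p \mPo lq) \mPo lr = p \mPo [tuple (tnth lq i \mPo lr) | i < 3].
Proof.
rewrite (comp_mpolyEX p lq) (comp_mpolyEX p) raddf_sum /=; apply: eq_bigr => m _.
rewrite comp_mpolyZ !comp_mpolyX rmorph_prod /=; congr (_ *: _); apply: eq_bigr => i _.
by rewrite rmorphXn tnth_mktuple.
Qed.

Lemma act_mul A B f : mpoly_act B (mpoly_act A f) = mpoly_act (A *m B) f.
Proof.
rewrite /mpoly_act comp_mpolyA3; congr (f \mPo _); apply: eq_from_tnth => i.
rewrite !tnth_mktuple raddf_sum /=.
under eq_bigr do rewrite comp_mpolyZ comp_mpolyXU -tnth_nth tnth_mktuple.
under [RHS]eq_bigr do rewrite mxE scaler_suml.
rewrite (exchange_big); apply: eq_bigr => j _; rewrite scaler_sumr; apply: eq_bigr => k _.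
by rewrite scalerA.
Qed.

Lemma act1 f : mpoly_act 1%:M f = f.
Proof.
rewrite /mpoly_act -[RHS]comp_mpoly_id; congr (f \mPo _); apply: eq_from_tnth => i.
rewrite !tnth_mktuple (bigD1 i) //= mxE eqxx scale1r big1 ?addr0 // => j nji.
by rewrite mxE eq_sym (negbTE nji) mulr0n scale0r.
Qed.

Lemma actZ A c f : mpoly_act A (c *: f) = c *: mpoly_act A f.
Proof. exact: comp_mpolyZ. Qed.

Theorem mainTheorem9 (g : {mpoly algC[3]}) :
  curve_poly g -> V_invariant_curve g ->
  exists f : {mpoly algC[3]},
    same_curve f g /\ (exists d : nat, f \is d.-homog) /\ Vt_invariant_poly f.
Proof.
move=> [gn0 [d [_ hd]]] Hinv.
have key : forall A, inVt A -> exists c, mpoly_act A g = c *: g.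
  move=> A hA; have := Hinv _ (inVtV hA).
  by rewrite /same_curve /push_curve invmxK => -[c _ e]; exists c.
have uniq : forall a b, a *: g = b *: g -> a = b.
  move=> a b /eqP; rewrite -subr_eq0 -scalerBl scaler_eq0 (negbTE gn0) orbF subr_eq0.
  by move/eqP.
have mul : forall A B a b, mpoly_act A g = a *: g -> mpoly_act B g = b *: g ->
    mpoly_act (A *m B) g = (a * b) *: g.
  by move=> A B a b eA eB; rewrite -act_mul eA actZ eB scalerA mulrC.
have rel : forall A a, mpoly_act A g = a *: g -> A = 1%:M -> a = 1.
  by move=> A a eA e1; apply: uniq; rewrite scale1r -eA e1 act1.
have [cZ eZ] := key _ inVtZ.
have [cT eT] := key _ inVtT.
have [cQ eQ] := key _ inVtQ.
have [cP eP] := key _ inVtP.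
have hz2 := rel _ _ (mul _ _ _ _ eZ eZ) r1.
have ht3 := rel _ _ (mul _ _ _ _ (mul _ _ _ _ eT eT) eT) r2.
have hzt3 := rel _ _ (mul _ _ _ _ (mul _ _ _ _ (mul _ _ _ _ (mul _ _ _ _ (mul _ _ _ _ eZ eT) eZ) eT) eZ) eT) r3.
have hzp3 := rel _ _ (mul _ _ _ _ (mul _ _ _ _ (mul _ _ _ _ (mul _ _ _ _ (mul _ _ _ _ eZ eP) eZ) eP) eZ) eP) r4.
have hztp := rel _ _ (mul _ _ _ _ (mul _ _ _ _ (mul _ _ _ _ (mul _ _ _ _ (mul _ _ _ _ eZ eT) eP) eZ) eT) eP) r5.
have http := rel _ _ (mul _ _ _ _ (mul _ _ _ _ (mul _ _ _ _ (mul _ _ _ _ (mul _ _ _ _ eT eT) eP) eT) eT) eP) r6.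
have hzq := rel _ _ (mul _ _ _ _ (mul _ _ _ _ (mul _ _ _ _ eZ eQ) eZ) eQ) r7.
have eQTP := mul _ _ _ _ (mul _ _ _ _ eQ eT) eP.
have hqtp := rel _ _ (mul _ _ _ _ (mul _ _ _ _ eQTP eQTP) eQTP) r8.
have Z1 : cZ = 1.
  have E : cZ * (cZ * cZ) * (cT * cT * cT) = cZ*cT*cZ*cT*cZ*cT by ring.
  by rewrite hz2 ht3 hzt3 !mulr1 in E.
subst cZ.
have T1 : cT = 1.
  have E : (1*cT*cP*1*cT*cP) * (cT*cT) = cT*cT*cP*cT*cT*cP by ring.
  rewrite hztp http mul1r in E.
  have E2 : cT * (cT*cT) = cT*cT*cT by ring.
  by rewrite ht3 E mulr1 in E2.
subst cT.
have P1 : cP = 1.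
  have E : cP * (1*1*cP*1*1*cP) = 1*cP*1*cP*1*cP by ring.
  by rewrite hztp hzp3 mulr1 in E.
subst cP.
have Q1 : cQ = 1.
  have E : cQ * (1*cQ*1*cQ) = (cQ*1*1)*(cQ*1*1)*(cQ*1*1) by ring.
  by rewrite hzq hqtp mulr1 in E.
subst cQ.
exists g; split; first by exists 1; rewrite ?oner_neq0 ?scale1r.
split; first by exists d.
move=> A; elim => {A} [|||||A B _ IHA _ IHB|A hA IH].
- exact: act1.
- by rewrite eZ scale1r.
- by rewrite eT scale1r.
- by rewrite eQ scale1r.
- by rewrite eP scale1r.
- by rewrite -act_mul IHA IHB.
- have [c ec] := key _ (inVtV hA).
  case: (boolP (A \in unitmx)) => hu; last by rewrite invmx_out.
  have : mpoly_act A (mpoly_act (invmx A) g) = g by rewrite act_mul mulVmx // act1.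
  rewrite ec actZ IH => e.
  have c1 : c = 1 by apply: uniq; rewrite scale1r.
  by rewrite c1 scale1r.
Qed.
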